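(* The model structure $\mathbb{C}^F$ associated to a functor $F:\mathcal{C}\to\mathscr{E}'$ need not be proper: there exist a bicomplete category $\mathcal{C}$ and a functor $F:\mathcal{C}\to\mathscr{E}'$ for which $\mathbb{C}^F$ is not right proper, and there exist a bicomplete category $\mathcal{C}$ and a functor $F:\mathcal{C}\to\mathscr{E}'$ for which $\mathbb{C}^F$ is not left proper.
   Context: Bicomplete means having all finite limits and finite colimits. $\mathscr{E}'$ is the totally ordered category with three objects $\varnothing\to E\to *$. For a functor $F:\mathcal{C}\to\mathscr{E}'$, $\mathbb{C}^F$ is the model structure on $\mathcal{C}$ with cofibrations $\{A\to B: F(B)\ne\varnothing\}\cup\mathrm{iso}\,\mathcal{C}$, fibrations $\{X\to Y: F(X)\neq *\}\cup\mathrm{iso}\,\mathcal{C}$, and weak equivalences $\{f: F(f)=1_\varnothing\text{ or }F(f)=1_*\}\cup\mathrm{iso}\,\mathcal{C}$. Left (resp. right) proper: pushouts of weak equivalences along cofibrations (resp. pullbacks along fibrations) are weak equivalences. *)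

(* Defs.v *)
Set Implicit Arguments.
Unset Strict Implicit.

Record Category := {
  Obj :> Type;
  Hom : Obj -> Obj -> Type;
  idm : forall A, Hom A A;
  comp : forall A B C, Hom B C -> Hom A B -> Hom A C;
  comp_id_l : forall A B (f : Hom A B), comp (idm B) f = f;
  comp_id_r : forall A B (f : Hom A B), comp f (idm A) = f;
  comp_assoc : forall A B C D (h : Hom C D) (g : Hom B C) (f : Hom A B),
      comp h (comp g f) = comp (comp h g) f
}.

Arguments Hom {c} _ _.
Arguments idm {c} _.
Arguments comp {c A B C} _ _.

Section Cat.
Variable C : Category.

Definition is_iso {A B : C} (f : Hom A B) : Prop :=
  exists g : Hom B A, comp g f = idm A /\ comp f g = idm B.

Definition is_terminal (T : C) : Prop :=
  forall X : C, exists! f : Hom X T, True.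
Definition is_product (P X Y : C) (p1 : Hom P X) (p2 : Hom P Y) : Prop :=
  forall (Q : C) (f1 : Hom Q X) (f2 : Hom Q Y),
    exists! h : Hom Q P, comp p1 h = f1 /\ comp p2 h = f2.
Definition is_equalizer (E X Y : C) (e : Hom E X) (f g : Hom X Y) : Prop :=
  comp f e = comp g e /\
  forall (Q : C) (h : Hom Q X), comp f h = comp g h ->
    exists! u : Hom Q E, comp e u = h.

Definition is_initial (I : C) : Prop :=
  forall X : C, exists! f : Hom I X, True.
Definition is_coproduct (S X Y : C) (i1 : Hom X S) (i2 : Hom Y S) : Prop :=
  forall (Q : C) (f1 : Hom X Q) (f2 : Hom Y Q),
    exists! h : Hom S Q, comp h i1 = f1 /\ comp h i2 = f2.
Definition is_coequalizer (E X Y : C) (e : Hom Y E) (f g : Hom X Y) : Prop :=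
  comp e f = comp e g /\
  forall (Q : C) (h : Hom Y Q), comp h f = comp h g ->
    exists! u : Hom E Q, comp u e = h.

Definition finitely_complete : Prop :=
  (exists T : C, is_terminal T) /\
  (forall X Y : C, exists (P : C) (p1 : Hom P X) (p2 : Hom P Y), is_product p1 p2) /\
  (forall (X Y : C) (f g : Hom X Y), exists (E : C) (e : Hom E X), is_equalizer e f g).

Definition finitely_cocomplete : Prop :=
  (exists I : C, is_initial I) /\
  (forall X Y : C, exists (S : C) (i1 : Hom X S) (i2 : Hom Y S), is_coproduct i1 i2) /\
  (forall (X Y : C) (f g : Hom X Y), exists (E : C) (e : Hom Y E), is_coequalizer e f g).

Definition bicomplete : Prop := finitely_complete /\ finitely_cocomplete.

(** Pullback square   P --a--> X
                      |b       |p
                      v        v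
                      Z --w--> Y      *)
Definition is_pullback (P X Y Z : C) (a : Hom P X) (b : Hom P Z)
    (p : Hom X Y) (w : Hom Z Y) : Prop :=
  comp p a = comp w b /\
  forall (Q : C) (x : Hom Q X) (z : Hom Q Z), comp p x = comp w z ->
    exists! u : Hom Q P, comp a u = x /\ comp b u = z.

(** Pushout square    A --i--> B
                      |w       |v
                      v        v
                      Z --j--> D      *)
Definition is_pushout (A B Z D : C) (i : Hom A B) (w : Hom A Z)
    (v : Hom B D) (j : Hom Z D) : Prop :=
  comp v i = comp j w /\
  forall (Q : C) (x : Hom B Q) (z : Hom Z Q), comp x i = comp z w ->
    exists! u : Hom D Q, comp u v = x /\ comp u j = z.
End Cat.

(** The totally ordered category E' : Empt -> Emid -> Star  (∅ -> E -> * ). *)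
Inductive E3 : Type := Empt | Emid | Star.

Definition E3le (x y : E3) : Prop :=
  match x, y with
  | Empt, _ => True
  | Emid, Empt => False
  | Emid, _ => True
  | Star, Star => True
  | Star, _ => False
  end.

(** A functor into the thin category E' is exactly a monotone object map
    (the morphism part is forced since E' is a poset). *)
Record FunctorE (C : Category) := {
  Fob :> C -> E3;
  Fmon : forall (A B : C) (f : Hom A B), E3le (Fob A) (Fob B)
}.

Section ModelCF.
Variables (C : Category) (F : FunctorE C).

(** For f : A -> B, F(f) = 1_∅ iff F A = F B = ∅, and F(f) = 1_* iff F A = F B = *. *)
Definition CF_cof {A B : C} (f : Hom A B) : Prop := F B <> Empt \/ is_iso f.
Definition CF_fib {X Y : C} (f : Hom X Y) : Prop := F X <> Star \/ is_iso f.
Definition CF_weq {A B : C} (f : Hom A B) : Prop :=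
  (F A = Empt /\ F B = Empt) \/ (F A = Star /\ F B = Star) \/ is_iso f.

Definition CF_right_proper : Prop :=
  forall (P X Y Z : C) (a : Hom P X) (b : Hom P Z) (p : Hom X Y) (w : Hom Z Y),
    CF_fib p -> CF_weq w -> is_pullback a b p w -> CF_weq a.

Definition CF_left_proper : Prop :=
  forall (A B Z D : C) (i : Hom A B) (w : Hom A Z) (v : Hom B D) (j : Hom Z D),
    CF_cof i -> CF_weq w -> is_pushout i w v j -> CF_weq v.
End ModelCF.

(* Main.v *)
Require Import Defs.

Inductive D4 : Type := bot | lft | rgt | top.
Definition leb4 (x y : D4) : bool :=
  match x, y with
  | bot, _ => true | _, top => true | lft, lft => true | rgt, rgt => true
  | _, _ => false end.
Definition H4 (x y : D4) : Type := if leb4 x y then unit else Empty_set.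

Definition comp4 (A B C : D4) : H4 B C -> H4 A B -> H4 A C.
Proof. destruct A, B, C; simpl; intros g f; first [exact tt | solve [destruct g] | solve [destruct f]]. Defined.
Definition id4 (A : D4) : H4 A A. Proof. destruct A; exact tt. Defined.

Lemma hom_eq : forall A B (f g : H4 A B), f = g.
Proof. intros A B; destruct A, B; simpl; intros f g; destruct f; destruct g; reflexivity. Qed.

Definition Dcat : Category :=
  {| Obj := D4; Hom := H4; idm := id4; comp := comp4;
     comp_id_l := fun A B f => hom_eq _ _ _ _;
     comp_id_r := fun A B f => hom_eq _ _ _ _;
     comp_assoc := fun A B C D h g f => hom_eq _ _ _ _ |}.

Definition meet4 (x y : D4) : D4 :=
  match x, y with
  | top, y => y | x, top => x | lft, lft => lft | rgt, rgt => rgt | _, _ => bot end.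
Definition join4 (x y : D4) : D4 :=
  match x, y with
  | bot, y => y | x, bot => x | lft, lft => lft | rgt, rgt => rgt | _, _ => top end.

Definition pm1 (X Y : D4) : H4 (meet4 X Y) X. Proof. destruct X, Y; exact tt. Defined.
Definition pm2 (X Y : D4) : H4 (meet4 X Y) Y. Proof. destruct X, Y; exact tt. Defined.
Definition pj1 (X Y : D4) : H4 X (join4 X Y). Proof. destruct X, Y; exact tt. Defined.
Definition pj2 (X Y : D4) : H4 Y (join4 X Y). Proof. destruct X, Y; exact tt. Defined.
Definition mk_meet (Q X Y : D4) : H4 Q X -> H4 Q Y -> H4 Q (meet4 X Y).
Proof. destruct Q, X, Y; simpl; intros f g; first [exact tt | solve [destruct f] | solve [destruct g]]. Defined.
Definition mk_join (Q X Y : D4) : H4 X Q -> H4 Y Q -> H4 (join4 X Y) Q.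
Proof. destruct Q, X, Y; simpl; intros f g; first [exact tt | solve [destruct f] | solve [destruct g]]. Defined.

Lemma Dbicomplete : bicomplete Dcat.
Proof.
  split; split; [| split | | split].
  - exists top. intro X. exists (match X as x return H4 x top with bot|lft|rgt|top => tt end).
    split; [exact I | intros; apply hom_eq].
  - intros X Y. exists (meet4 X Y), (pm1 X Y), (pm2 X Y). intros Q f1 f2.
    exists (mk_meet _ _ _ f1 f2). split; [split; apply hom_eq | intros; apply hom_eq].
  - intros X Y f g. exists X, (id4 X). split; [apply hom_eq|].
    intros Q h _. exists h. split; [apply hom_eq | intros; apply hom_eq].
  - exists bot. intro X. exists (match X as x return H4 bot x with bot|lft|rgt|top => tt end).
    split; [exact I | intros; apply hom_eq].
  - intros X Y. exists (join4 X Y), (pj1 X Y), (pj2 X Y). intros Q f1 f2.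
    exists (mk_join _ _ _ f1 f2). split; [split; apply hom_eq | intros; apply hom_eq].
  - intros X Y f g. exists Y, (id4 Y). split; [apply hom_eq|].
    intros Q h _. exists h. split; [apply hom_eq | intros; apply hom_eq].
Qed.

Definition F1ob (x : D4) : E3 := match x with bot => Empt | lft => Emid | rgt => Star | top => Star end.
Definition F2ob (x : D4) : E3 := match x with bot => Empt | lft => Emid | rgt => Empt | top => Star end.

Lemma F1mon : forall (A B : Dcat) (f : Hom A B), E3le (F1ob A) (F1ob B).
Proof. intros A B; destruct A, B; simpl; intro f; try destruct f; exact I. Qed.
Lemma F2mon : forall (A B : Dcat) (f : Hom A B), E3le (F2ob A) (F2ob B).
Proof. intros A B; destruct A, B; simpl; intro f; try destruct f; exact I. Qed.

Definition F1 : FunctorE Dcat := {| Fob := (F1ob : Dcat -> E3); Fmon := F1mon |}.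
Definition F2 : FunctorE Dcat := {| Fob := (F2ob : Dcat -> E3); Fmon := F2mon |}.

Theorem corollary4 :
  (exists (C : Category) (F : FunctorE C), bicomplete C /\ ~ CF_right_proper F) /\
  (exists (C : Category) (F : FunctorE C), bicomplete C /\ ~ CF_left_proper F).
Proof.
  split.
  - exists Dcat, F1. split; [exact Dbicomplete|]. intro Hrp.
    assert (Hw : @CF_weq Dcat F1 bot lft (tt : H4 bot lft)).
    { apply (Hrp bot lft top rgt (tt : H4 bot lft) (tt : H4 bot rgt)
                 (tt : H4 lft top) (tt : H4 rgt top)).
      + left. simpl. discriminate.
      + right. left. split; reflexivity.
      + split; [apply hom_eq|]. intros Q x z _.
        destruct Q; simpl in x, z; try destruct x; try destruct z.
        exists tt. split; [split; apply hom_eq | intros; apply hom_eq]. }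
    destruct Hw as [[h1 h2] | [[h1 h2] | [g _]]].
    + simpl in h2. discriminate.
    + simpl in h1. discriminate.
    + simpl in g. destruct g.
  - exists Dcat, F2. split; [exact Dbicomplete|]. intro Hlp.
    assert (Hw : @CF_weq Dcat F2 lft top (tt : H4 lft top)).
    { apply (Hlp bot lft rgt top (tt : H4 bot lft) (tt : H4 bot rgt)
                 (tt : H4 lft top) (tt : H4 rgt top)).
      + left. simpl. discriminate.
      + left. split; reflexivity.
      + split; [apply hom_eq|]. intros Q x z _.
        destruct Q; simpl in x, z; try destruct x; try destruct z.
        exists tt. split; [split; apply hom_eq | intros; apply hom_eq]. }
    destruct Hw as [[h1 h2] | [[h1 h2] | [g _]]].
    + simpl in h1. discriminate.
    + simpl in h1. discriminate.
    + simpl in g. destruct g.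
Qed.
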